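(* Let $R$, $G$, $*$, $\sigma$ and $\mathcal{S}$ be as in the context, and suppose $\mathcal{S}$ is anticommutative. If $*$ is not the identity map on $G$, then: - $\operatorname{char}(R)=4$; - for every $x\in G\setminus G_*$ we have $xx^*=x^*x$ and $x^2\in G_*$.
   Context: Throughout, $R$ is a commutative ring with unity with $\operatorname{char}(R)\neq 2$, and $\mathcal{U}(R)$ is its unit group. $G$ is a group with an involution $*$, i.e. a map $x\mapsto x^*$ with $(xy)^*=y^*x^*$ and $(x^* )^*=x$. The map $\sigma:G\to\mathcal{U}(R)$ is a nontrivial group homomorphism with kernel $N=\ker\sigma$, and it is compatible with $*$: $xx^*\in N$ for all $x\in G$. The group ring $RG$ carries the involution $\left(\sum_{x\in G}\alpha_x x\right)^{\sigma*}=\sum_{x\in G}\sigma(x)\alpha_x x^*$. Write $G_*=\{x\in G: x^*=x\}$ and $N_*=G_*\cap N$. Let $\mathcal{S}$ be the $R$-submodule of $RG$ spanned by the union of the following three sets: - $2\mathcal{S}_1=\{2x: x\in N_*\}$; - $\mathcal{S}_2=\{\alpha x: x\in G_*\setminus N,\ \alpha\in R,\ \alpha(1-\sigma(x))=0\}$; - $\mathcal{S}_3=\{x+\sigma(x)x^*: x\in G\setminus G_*\}$. $\mathcal{S}$ is called anticommutative if $ab+ba=0$ for all $a,b\in\mathcal{S}$. *)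

(* Defs.v *)
From HB Require Import structures.
From mathcomp Require Import all_boot all_order all_algebra.
From mathcomp Require Import monoid.
Set Implicit Arguments. Unset Strict Implicit. Unset Printing Implicit Defensive.
Import GRing.Theory.
Local Open Scope ring_scope.

Definition ring_char_is (R : nzRingType) (n : nat) : Prop :=
  if n is 0 then forall m : nat, (0 < m)%N -> m%:R != 0 :> R
  else n%:R = 0 :> R /\ forall m : nat, (0 < m < n)%N -> m%:R != 0 :> R.

(* An element of RG is represented by a formal finite R-linear combination
   of group elements, i.e. a list of (coefficient, group element) pairs;
   two representatives denote the same element of RG iff they have the same
   coefficient at every g in G. *)
Definition grpring (R : nzRingType) (G : groupType) := seq (R * G).

Section GroupRing.
Variables (R : nzRingType) (G : groupType).

Definition rg_coef (a : grpring R G) (g : G) : R :=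
  \sum_(p <- a | p.2 == g) p.1.

Definition rg_eq (a b : grpring R G) : Prop :=
  forall g : G, rg_coef a g = rg_coef b g.

Definition rg_add (a b : grpring R G) : grpring R G := a ++ b.

Definition rg_mul (a b : grpring R G) : grpring R G :=
  [seq (p.1 * q.1, (p.2 * q.2)%g) | p <- a, q <- b].

Definition rg_scale (r : R) (a : grpring R G) : grpring R G :=
  [seq (r * p.1, p.2) | p <- a].

Definition rg_term (r : R) (x : G) : grpring R G := [:: (r, x)].

End GroupRing.

Section SetS.
Variables (R : comUnitRingType) (G : groupType)
          (star : G -> G) (sigma : G -> R).

Definition S_gen (a : grpring R G) : Prop :=
  (exists x : G, star x = x /\ sigma x = 1 /\ a = rg_term 2%:R x)
  \/ (exists (x : G) (alpha : R),
        star x = x /\ sigma x != 1 /\ alpha * (1 - sigma x) = 0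
        /\ a = rg_term alpha x)
  \/ (exists x : G, star x != x /\
        a = rg_add (rg_term 1 x) (rg_term (sigma x) (star x))).

Inductive in_S : grpring R G -> Prop :=
  | in_S0 : in_S [::]
  | in_S_cons (r : R) (s a : grpring R G) :
      S_gen s -> in_S a -> in_S (rg_add (rg_scale r s) a)
  | in_S_eq (a b : grpring R G) : rg_eq a b -> in_S a -> in_S b.

Definition S_anticommutative : Prop :=
  forall a b : grpring R G, in_S a -> in_S b ->
    rg_eq (rg_add (rg_mul a b) (rg_mul b a)) [::].

End SetS.

(* Main.v *)
Require Import Defs.
From HB Require Import structures.
From mathcomp Require Import all_boot all_order all_algebra.
From mathcomp Require Import monoid.
Import GRing.Theory.
Local Open Scope ring_scope.

Lemma coef_cons (R : nzRingType) (G : groupType) c (h g : G) (l : grpring R G) :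
  rg_coef ((c, h) :: l) g = (if h == g then c else 0) + rg_coef l g.
Proof. by rewrite /rg_coef big_cons /=; case: (h == g); rewrite ?add0r. Qed.

Lemma coef_nil (R : nzRingType) (G : groupType) (g : G) :
  rg_coef ([::] : grpring R G) g = 0.
Proof. by rewrite /rg_coef big_nil. Qed.

Lemma gen_in_S (R : comUnitRingType) (G : groupType) (star : G -> G) (sigma : G -> R) s :
  S_gen star sigma s -> in_S star sigma s.
Proof.
move=> hs; apply: (in_S_eq (a := rg_add (rg_scale 1 s) [::])); last first.
  by apply: in_S_cons => //; apply: in_S0.
move=> g; rewrite /rg_add cats0 /rg_scale /rg_coef big_map.
by apply: eq_bigr => p _; rewrite mul1r.
Qed.

Theorem lemma3p3 (R : comUnitRingType) (G : groupType)
  (star : G -> G) (sigma : G -> R)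
  (hchar : ~ ring_char_is R 2)
  (star_mul : forall x y : G, star (x * y)%g = (star y * star x)%g)
  (star_inv : forall x : G, star (star x) = x)
  (sigma_unit : forall x : G, sigma x \is a GRing.unit)
  (sigma_mul : forall x y : G, sigma (x * y)%g = sigma x * sigma y)
  (sigma_nontriv : exists x : G, sigma x != 1)
  (sigma_compat : forall x : G, sigma (x * star x)%g = 1)
  (hanti : S_anticommutative star sigma)
  (star_nonid : exists x : G, star x != x) :
  ring_char_is R 4 /\
  (forall x : G, star x != x ->
     (x * star x)%g = (star x * x)%g /\ star (x * x)%g = (x * x)%g).
Proof.
have two_ne0 : (2%:R : R) != 0.
  apply/negP => /eqP h2; apply: hchar; rewrite /ring_char_is; split => // m /andP [m0 m2].
  by case: m m0 m2 => [|[|m]] // _ _; rewrite oner_neq0.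
have star1 : star 1%g = 1%g.
  have h := star_mul 1%g 1%g; rewrite mulg1 in h.
  by apply: (mulgI (star 1%g)); rewrite -h mulg1.
have sigma1 : sigma 1%g = 1.
  by have := sigma_compat 1%g; rewrite star1 mulg1.
have inA : forall x, star x != x ->
    in_S star sigma [:: (1, x); (sigma x, star x)].
  move=> x hx; apply: gen_in_S; right; right; by exists x.
have in2 : in_S star sigma [:: (2%:R, 1%g)].
  apply: gen_in_S; left; by exists 1%g.
have [x0 hx0] := star_nonid.
split.
  have h := hanti _ _ in2 (inA _ hx0) x0.
  move: h; rewrite /rg_add /rg_mul /= !mul1g !mulg1 !coef_cons coef_nil eqxx.
  rewrite (negbTE hx0) /= !addr0 !mulr1 !mul1r => h4.
  have h4' : (4%:R : R) = 0.
    by move: h4; rewrite (natrD R 2 2) add0r => <-.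
  split => // m /andP [m0 m4].
  case: m m0 m4 => [|[|[|[|m]]]] // _ _.
  - exact: oner_neq0.
  - apply/eqP => h3; apply: (negP (@oner_neq0 R)); apply/eqP.
    by rewrite -[1](addKr 3%:R) natr1 h4' h3 addr0 oppr0.
move=> x hx.
have hne : forall a y z : G, y != z -> (a * y == a * z)%g = false.
  by move=> a y z; apply: contraNF => /eqP /mulgI ->.
have hne' : forall a y z : G, y != z -> (y * a == z * a)%g = false.
  by move=> a y z; apply: contraNF => /eqP /mulIg ->.
have hxs : (x != star x) by rewrite eq_sym.
have hsx : (star x * star x == x * star x)%g = false by exact: hne' _ _ _ hx.
have hxx : (x * x == x * star x)%g = false by exact: hne _ _ _ hxs.
have hsxx : (star x * x == x * x)%g = false by exact: hne' _ _ _ hx.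
have hxsx : (x * star x == x * x)%g = false by exact: hne _ _ _ hx.
have two_mul : forall r : R, r \is a GRing.unit -> 2%:R * r != 0.
  move=> r ur; apply/negP => /eqP h; move: two_ne0; rewrite -(mulrK ur 2%:R) h mul0r.
  by rewrite eqxx.
have h := hanti _ _ (inA _ hx) (inA _ hx).
split.
  apply/eqP; apply/negPn/negP => hc.
  have := h (x * star x)%g.
  have hc' : ((star x * x)%g == (x * star x)%g) = false by rewrite eq_sym (negbTE hc).
  rewrite /rg_add /rg_mul /= !coef_cons coef_nil eqxx hsx hxx hc'.
  rewrite ?add0r ?addr0 !mul1r => hh.
  by move: (two_mul _ (sigma_unit x)); rewrite mulr2n mulrDl !mul1r hh eqxx.
rewrite star_mul; apply/eqP; apply/negPn/negP => hc.
have := h (x * x)%g.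
rewrite /rg_add /rg_mul /= !coef_cons coef_nil eqxx hsxx hxsx (negbTE hc).
rewrite ?add0r ?addr0 !mul1r => hh.
by move: (two_mul _ (@unitr1 R)); rewrite mulr1 (natrD R 1 1) hh eqxx.
Qed.
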